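(* Let $(\psi,p,A)$ be a regular normal extremal containing an interior three-bang block $Y(\ell_1)\,X(\tau_X)\,Y(\ell_2)$, i.e. three consecutive arcs, a $Y$-arc of length $\ell_1\in(0,2\pi)$, an $X$-arc of length $\tau_X=\pi/\sin\gamma$, and a $Y$-arc of length $\ell_2\in(0,2\pi)$, whose initial and final times are both switching times. If the reduced data at the initial time of the block are $(0,a,b)$ with $a\neq0$, then the reduced data at its final time are $(0,-a,b)$, i.e. the same as those produced by a single switching-to-switching $X$-arc of length $\tau_X$ started from $(0,a,b)$, while the block has total length $\ell_1+\tau_X+\ell_2>\tau_X$. Consequently, such an interior $YXY$ block cannot occur on a regular normal time-optimal extremal.
   Context: Fix $\gamma\in(0,\pi/2)$, $s=\sin\gamma$, $c=\cos\gamma$, and $X=\begin{pmatrix}0&s^2&sc\\-s^2&0&0\\-sc&0&0\end{pmatrix}$, $Y=\begin{pmatrix}0&1&0\\-1&0&0\\0&0&0\end{pmatrix}$ on $\mathbb R^3$ with standard basis $e_1,e_2,e_3$ and standard inner product. Let $\Sigma=\{\psi:\langle e_3,\psi\rangle=0\}$, $\psi_0=(0,s,c)^\top$. Time-optimal problem: over piecewise constant controls $A:[0,T]\to\{X,Y\}$ with finitely many discontinuities (switching times) and trajectories $\dot\psi=A(t)\psi$, $\psi(0)=\psi_0$, minimize $T$ subject to $\psi(T)\in\Sigma$. Maximal intervals on which $A\equiv X$ (resp. $Y$) are $X$-arcs (resp. $Y$-arcs), also called bangs. A normal extremal is such a trajectory with a nonzero absolutely continuous costate $p$ satisfying $\dot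 p=-A(t)^\top p$ and, for a.e. $t$, $\langle p,A(t)\psi\rangle-1=\max_{B\in\{X,Y\}}(\langle p,B\psi\rangle-1)$. Let $F_1=X-Y$, $F_2=[X,Y]$, $F_3=[Y,[X,Y]]$, and reduced data $(\phi_1,\phi_2,\phi_3)$ with $\phi_i=\langle p,F_i\psi\rangle$; the switching function is $\Phi=\phi_1$. A normal extremal is regular (bang–bang) if $\Phi$ vanishes only at isolated times and at every switching time $\phi_1=0$ and $\phi_2\neq 0$. Time-optimal means the trajectory solves the minimization problem. *)

(* Defs.v *)
From Stdlib Require Import Reals Lra List Sorted.
Open Scope R_scope.

(* Vectors of R^3 and 3x3 matrices, indexed by 0,1,2 (values at other
   indices are irrelevant and never used). *)
Definition vec := nat -> R.
Definition mat := nat -> nat -> R.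

Definition dot (u v : vec) : R :=
  u 0%nat * v 0%nat + u 1%nat * v 1%nat + u 2%nat * v 2%nat.
Definition mv (M : mat) (v : vec) : vec := fun i =>
  M i 0%nat * v 0%nat + M i 1%nat * v 1%nat + M i 2%nat * v 2%nat.
Definition mm (M N : mat) : mat := fun i j =>
  M i 0%nat * N 0%nat j + M i 1%nat * N 1%nat j + M i 2%nat * N 2%nat j.
Definition msub (M N : mat) : mat := fun i j => M i j - N i j.
Definition mopp (M : mat) : mat := fun i j => - M i j.
Definition mtr (M : mat) : mat := fun i j => M j i.
Definition bracket (M N : mat) : mat := msub (mm M N) (mm N M).

Definition mk3 (a00 a01 a02 a10 a11 a12 a20 a21 a22 : R) : mat := fun i j =>
  match i, j with
  | 0%nat, 0%nat => a00 | 0%nat, 1%nat => a01 | 0%nat, 2%nat => a02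
  | 1%nat, 0%nat => a10 | 1%nat, 1%nat => a11 | 1%nat, 2%nat => a12
  | 2%nat, 0%nat => a20 | 2%nat, 1%nat => a21 | 2%nat, 2%nat => a22
  | _, _ => 0%R
  end.
Definition mkv (x y z : R) : vec := fun i =>
  match i with 0%nat => x | 1%nat => y | 2%nat => z | _ => 0%R end.

Definition veq (u v : vec) : Prop := forall i, (i < 3)%nat -> u i = v i.

Definition Xm (g : R) : mat :=
  mk3 0 (sin g ^ 2) (sin g * cos g)
      (- sin g ^ 2) 0 0
      (- (sin g * cos g)) 0 0.
Definition Ym : mat := mk3 0 1 0 (-1) 0 0 0 0 0.
Definition e3 : vec := mkv 0 0 1.
Definition psi0 (g : R) : vec := mkv 0 (sin g) (cos g).
Definition inSigma (v : vec) : Prop := dot e3 v = 0.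

Inductive ctrl := CX | CY.
Definition cmat (g : R) (C : ctrl) : mat :=
  match C with CX => Xm g | CY => Ym end.

Definition F1 (g : R) : mat := msub (Xm g) Ym.
Definition F2 (g : R) : mat := bracket (Xm g) Ym.
Definition F3 (g : R) : mat := bracket Ym (bracket (Xm g) Ym).

Definition phi1 g (psi p : R -> vec) t := dot (p t) (mv (F1 g) (psi t)).
Definition phi2 g (psi p : R -> vec) t := dot (p t) (mv (F2 g) (psi t)).
Definition phi3 g (psi p : R -> vec) t := dot (p t) (mv (F3 g) (psi t)).

Definition has_vderiv (f : R -> vec) (t : R) (d : vec) : Prop :=
  forall i, (i < 3)%nat -> derivable_pt_lim (fun u => f u i) t (d i).
Definition cont_on (T : R) (f : R -> vec) : Prop :=
  forall i, (i < 3)%nat -> forall t, 0 <= t <= T -> forall eps, eps > 0 ->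
    exists delta, delta > 0 /\ forall u, 0 <= u <= T -> Rabs (u - t) < delta ->
      Rabs (f u i - f t i) < eps.

(* Piecewise constant controls with finitely many switching times sw:
   sw is strictly increasing in (0,T), A is constant on each open interval
   between consecutive points of 0 :: sw ++ [T], and takes different values
   on consecutive intervals (so every point of sw is a genuine switch). *)
Definition pts (T : R) (sw : list R) : list R := 0 :: sw ++ T :: nil.
Definition ival (l : list R) (k : nat) (u : R) : Prop :=
  nth k l 0 < u < nth (S k) l 0.
Definition pw_const (T : R) (A : R -> ctrl) (sw : list R) : Prop :=
  Sorted Rlt sw /\ (forall t, In t sw -> 0 < t < T) /\
  (forall k, (S k < length (pts T sw))%nat -> forall u v,
      ival (pts T sw) k u -> ival (pts T sw) k v -> A u = A v) /\
  (forall k, (S (S k) < length (pts T sw))%nat -> forall u v,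
      ival (pts T sw) k u -> ival (pts T sw) (S k) v -> A u <> A v).

Definition traj (g T : R) (A : R -> ctrl) (psi : R -> vec) : Prop :=
  cont_on T psi /\ veq (psi 0) (psi0 g) /\
  exists E : list R, forall t, 0 < t < T -> ~ In t E ->
    has_vderiv psi t (mv (cmat g (A t)) (psi t)).

Definition admissible (g T : R) (A : R -> ctrl) (psi : R -> vec) : Prop :=
  0 <= T /\ (exists sw, pw_const T A sw) /\ traj g T A psi /\ inSigma (psi T).

Definition time_optimal (g T : R) (A : R -> ctrl) (psi : R -> vec) : Prop :=
  admissible g T A psi /\
  forall T' A' psi', admissible g T' A' psi' -> T <= T'.

Definition normal_extremal (g T : R) (A : R -> ctrl) (sw : list R)
    (psi p : R -> vec) : Prop :=
  0 < T /\ pw_const T A sw /\ traj g T A psi /\ inSigma (psi T) /\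
  cont_on T p /\
  (exists t, 0 <= t <= T /\ exists i, (i < 3)%nat /\ p t i <> 0) /\
  (exists E : list R, forall t, 0 < t < T -> ~ In t E ->
     has_vderiv p t (mv (mopp (mtr (cmat g (A t)))) (p t))) /\
  (exists E : list R, forall t, 0 < t < T -> ~ In t E -> forall B : ctrl,
     dot (p t) (mv (cmat g (A t)) (psi t)) - 1 >=
     dot (p t) (mv (cmat g B) (psi t)) - 1).

Definition regular (g T : R) (sw : list R) (psi p : R -> vec) : Prop :=
  (forall t, 0 <= t <= T -> phi1 g psi p t = 0 ->
     exists eps, eps > 0 /\ forall u, 0 <= u <= T -> 0 < Rabs (u - t) < eps ->
       phi1 g psi p u <> 0) /\
  (forall t, In t sw -> phi1 g psi p t = 0 /\ phi2 g psi p t <> 0).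

(* Main.v *)
Require Import Defs.
From Stdlib Require Import Reals Lra Lia List Sorted.
From Coquelicot Require Import Coquelicot.
Open Scope R_scope.

Lemma cos_ne1 x : 0 < x < 2*PI -> cos x <> 1.
Proof.
  intros Hx Hc.
  assert (sin (x/2) > 0) by (apply sin_gt_0; lra).
  replace x with (2*(x/2)) in Hc by field.
  rewrite cos_2a_sin in Hc. nra.
Qed.

Lemma const_arc (f : R -> R) (E : list R) : forall a b, a <= b ->
  (forall x, a <= x <= b -> continuity_pt f x) ->
  (forall x, a < x < b -> ~ In x E -> derivable_pt_lim f x 0) -> f a = f b.
Proof.
  induction E as [|e E IH]; intros a b Hab Hc Hd.
  - destruct (MVT_gen f a b (fun _ => 0)) as [c [_ Hc']].
    + intros x Hx. apply is_derive_Reals. apply Hd; [|auto].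
      rewrite Rmin_left, Rmax_right in Hx by lra. lra.
    + intros x Hx. rewrite Rmin_left, Rmax_right in Hx by lra. apply Hc; lra.
    + lra.
  - destruct (Rlt_dec a e) as [H1|H1]; [destruct (Rlt_dec e b) as [H2|H2]|].
    + transitivity (f e).
      * apply IH; [lra| intros; apply Hc; lra |].
        intros x Hx Hn. apply Hd; [lra|]. intros [->|Hi]; [lra|auto].
      * apply IH; [lra| intros; apply Hc; lra |].
        intros x Hx Hn. apply Hd; [lra|]. intros [->|Hi]; [lra|auto].
    + apply IH; auto. intros x Hx Hn. apply Hd; auto. intros [->|Hi]; [lra|auto].
    + apply IH; auto. intros x Hx Hn. apply Hd; auto. intros [->|Hi]; [lra|auto].
Qed.

Lemma d_plus f g t a b : derivable_pt_lim f t a -> derivable_pt_lim g t b ->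
  derivable_pt_lim (fun u => f u + g u) t (a + b).
Proof. intros; now apply derivable_pt_lim_plus. Qed.
Lemma d_minus f g t a b : derivable_pt_lim f t a -> derivable_pt_lim g t b ->
  derivable_pt_lim (fun u => f u - g u) t (a - b).
Proof. intros; now apply derivable_pt_lim_minus. Qed.
Lemma d_mult f g t a b : derivable_pt_lim f t a -> derivable_pt_lim g t b ->
  derivable_pt_lim (fun u => f u * g u) t (a * g t + f t * b).
Proof. intros; now apply derivable_pt_lim_mult. Qed.
Lemma d_opp f t a : derivable_pt_lim f t a ->
  derivable_pt_lim (fun u => - f u) t (- a).
Proof. intros; now apply derivable_pt_lim_opp. Qed.
Lemma d_const c t : derivable_pt_lim (fun _ => c) t 0.
Proof. apply derivable_pt_lim_const. Qed.
Lemma d_eq f t l1 l2 : derivable_pt_lim f t l1 -> l1 = l2 -> derivable_pt_lim f t l2.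
Proof. intros; subst; auto. Qed.
Lemma d_cos k c t : derivable_pt_lim (fun u => cos (k * (u - c))) t (- sin (k * (t - c)) * k).
Proof.
  apply (derivable_pt_lim_comp (fun u => k * (u - c)) cos).
  eapply d_eq. apply (d_mult (fun _ => k) (fun u => u - c)).
  apply derivable_pt_lim_const.
  apply (d_minus (fun u => u) (fun _ => c)). apply derivable_pt_lim_id. apply derivable_pt_lim_const.
  ring.
  apply derivable_pt_lim_cos.
Qed.
Lemma d_sin k c t : derivable_pt_lim (fun u => sin (k * (u - c))) t (cos (k * (t - c)) * k).
Proof.
  apply (derivable_pt_lim_comp (fun u => k * (u - c)) sin).
  eapply d_eq. apply (d_mult (fun _ => k) (fun u => u - c)).
  apply derivable_pt_lim_const.
  apply (d_minus (fun u => u) (fun _ => c)). apply derivable_pt_lim_id. apply derivable_pt_lim_const.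
  ring.
  apply derivable_pt_lim_sin.
Qed.

Lemma c_plus f g t : continuity_pt f t -> continuity_pt g t -> continuity_pt (fun u => f u + g u) t.
Proof. intros; now apply continuity_pt_plus. Qed.
Lemma c_minus f g t : continuity_pt f t -> continuity_pt g t -> continuity_pt (fun u => f u - g u) t.
Proof. intros; now apply continuity_pt_minus. Qed.
Lemma c_mult f g t : continuity_pt f t -> continuity_pt g t -> continuity_pt (fun u => f u * g u) t.
Proof. intros; now apply continuity_pt_mult. Qed.
Lemma c_opp f t : continuity_pt f t -> continuity_pt (fun u => - f u) t.
Proof. intros; now apply continuity_pt_opp. Qed.
Lemma c_const c t : continuity_pt (fun _ => c) t.
Proof. apply continuity_pt_const. intros x y; reflexivity. Qed.
Lemma c_cos k c t : continuity_pt (fun u => cos (k * (u - c))) t.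
Proof. apply derivable_continuous_pt. exists (- sin (k * (t - c)) * k). apply d_cos. Qed.
Lemma c_sin k c t : continuity_pt (fun u => sin (k * (u - c))) t.
Proof. apply derivable_continuous_pt. exists (cos (k * (t - c)) * k). apply d_sin. Qed.

Ltac dtac :=
  match goal with
  | |- derivable_pt_lim (fun _ => ?c) _ _ => apply d_const
  | |- derivable_pt_lim (fun u => @?f u + @?g u) _ _ => apply (d_plus f g); dtac
  | |- derivable_pt_lim (fun u => @?f u - @?g u) _ _ => apply (d_minus f g); dtac
  | |- derivable_pt_lim (fun u => @?f u * @?g u) _ _ => apply (d_mult f g); dtac
  | |- derivable_pt_lim (fun u => - @?f u) _ _ => apply (d_opp f); dtac
  | |- derivable_pt_lim (fun u => cos (?k * (u - ?c))) _ _ => apply d_cos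
  | |- derivable_pt_lim (fun u => sin (?k * (u - ?c))) _ _ => apply d_sin
  | H : forall i, (i < 3)%nat -> derivable_pt_lim (fun u => ?q u i) ?t _
    |- derivable_pt_lim (fun u => ?q u ?j) ?t _ => apply H; lia
  end.
Ltac ctac :=
  match goal with
  | |- continuity_pt (fun _ => ?c) _ => apply c_const
  | |- continuity_pt (fun u => @?f u + @?g u) _ => apply (c_plus f g); ctac
  | |- continuity_pt (fun u => @?f u - @?g u) _ => apply (c_minus f g); ctac
  | |- continuity_pt (fun u => @?f u * @?g u) _ => apply (c_mult f g); ctac
  | |- continuity_pt (fun u => - @?f u) _ => apply (c_opp f); ctac
  | |- continuity_pt (fun u => cos (?k * (u - ?c))) _ => apply c_cos
  | |- continuity_pt (fun u => sin (?k * (u - ?c))) _ => apply c_sin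
  | H : forall i, (i < 3)%nat -> continuity_pt (fun u => ?q u i) ?t
    |- continuity_pt (fun u => ?q u ?j) ?t => apply H; lia
  end.

Lemma cont_pt T f x i : cont_on T f -> 0 < x < T -> (i < 3)%nat ->
  continuity_pt (fun u => f u i) x.
Proof.
  intros Hc Hx Hi eps Heps.
  destruct (Hc i Hi x ltac:(lra) eps Heps) as [d [Hd H]].
  exists (Rmin d (Rmin x (T - x))). split.
  - repeat apply Rmin_pos; lra.
  - intros y [_ Hy]. unfold R_dist in *. simpl in *. unfold R_dist in *.
    assert (Rmin d (Rmin x (T - x)) <= d) by apply Rmin_l.
    assert (Rmin d (Rmin x (T - x)) <= Rmin x (T-x)) by apply Rmin_r.
    assert (Rmin x (T - x) <= x) by apply Rmin_l.
    assert (Rmin x (T - x) <= T - x) by apply Rmin_r.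
    apply H; [|lra]. apply Rabs_def2 in Hy. lra.
Qed.

Ltac unf := unfold cmat, mopp, mtr, phi1, phi2, phi3, F1, F2, F3, bracket, msub, mm, mv, dot, Xm, Ym, mk3,
  cmat, mopp, mtr in *; cbv beta iota in *.

Lemma hderiv (psi p : R -> vec) x M C :
  has_vderiv psi x (mv C (psi x)) -> has_vderiv p x (mv (mopp (mtr C)) (p x)) ->
  derivable_pt_lim (fun u => dot (p u) (mv M (psi u))) x (dot (p x) (mv (bracket M C) (psi x))).
Proof.
  intros D1 D2. unfold has_vderiv in D1, D2.
  unfold dot, mv. eapply d_eq; [dtac|].
  unfold bracket, msub, mm, mopp, mtr, mv, dot. ring.
Qed.

Lemma brX1 g (psi p : R -> vec) x :
  dot (p x) (mv (bracket (F1 g) (Xm g)) (psi x)) = phi2 g psi p x.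
Proof. unf. ring. Qed.
Lemma brX2 g (psi p : R -> vec) x :
  dot (p x) (mv (bracket (F2 g) (Xm g)) (psi x)) = - sin g ^ 2 * phi1 g psi p x.
Proof.
  pose proof (sin2_cos2 g) as HH. unfold Rsqr in HH.
  transitivity (- sin g ^ 2 * phi1 g psi p x
     + sin g ^ 2 * (1 - (sin g * sin g + cos g * cos g)) * (psi x 0%nat * p x 1%nat - psi x 1%nat * p x 0%nat)).
  - unf. ring.
  - rewrite HH. ring.
Qed.
Lemma brX3 g (psi p : R -> vec) x :
  dot (p x) (mv (bracket (F3 g) (Xm g)) (psi x)) = sin g ^ 2 * phi2 g psi p x.
Proof. unf. ring. Qed.

Section S.
Variables (g T : R) (A : R -> ctrl) (psi p : R -> vec) (E1 E2 : list R).
Hypothesis Hcpsi : cont_on T psi.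
Hypothesis Hcp : cont_on T p.
Hypothesis Hdpsi : forall t, 0<t<T -> ~In t E1 -> has_vderiv psi t (mv (cmat g (A t)) (psi t)).
Hypothesis Hdp : forall t, 0<t<T -> ~In t E2 -> has_vderiv p t (mv (mopp (mtr (cmat g (A t)))) (p t)).

Lemma arc_const (C : ctrl) (Q : R -> R) t0 t1 :
  0 < t0 -> t1 < T -> t0 <= t1 ->
  (forall u, t0 < u < t1 -> A u = C) ->
  (forall x, (forall i, (i<3)%nat -> continuity_pt (fun u => psi u i) x) ->
             (forall i, (i<3)%nat -> continuity_pt (fun u => p u i) x) ->
             continuity_pt Q x) ->
  (forall x, has_vderiv psi x (mv (cmat g C) (psi x)) ->
             has_vderiv p x (mv (mopp (mtr (cmat g C))) (p x)) ->
             derivable_pt_lim Q x 0) ->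
  Q t0 = Q t1.
Proof.
  intros H0 H1 H01 HA HC HD.
  apply (const_arc Q (E1 ++ E2)); auto.
  - intros x Hx. apply HC; intros; apply cont_pt with T; auto; lra.
  - intros x Hx Hn. rewrite in_app_iff in Hn.
    specialize (Hdpsi x ltac:(lra) ltac:(tauto)).
    specialize (Hdp x ltac:(lra) ltac:(tauto)).
    rewrite HA in Hdpsi, Hdp by lra. auto.
Qed.

Ltac unfg := unfold phi1, phi2, phi3, F1, F2, F3, bracket, msub, mm, mv, dot, Xm, Ym, mk3;
  cbv beta iota.
Ltac sidec := intros ? ? ?; unfg; ctac.
Ltac sided := intros ? D1 D2; unfold has_vderiv in D1, D2; unfg; eapply d_eq; [dtac|]; unf; unf; ring.

Lemma Yarc t0 t1 a b :
  0 < t0 -> t1 < T -> 0 < t1 - t0 < 2 * PI ->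
  (forall u, t0 < u < t1 -> A u = CY) ->
  phi1 g psi p t0 = 0 -> phi2 g psi p t0 = a -> phi3 g psi p t0 = b -> a <> 0 ->
  phi1 g psi p t1 = 0 -> phi2 g psi p t1 = - a /\ phi3 g psi p t1 = b.
Proof.
  intros H0 H1 Hl HA P1 P2 P3 Ha Q1.
  assert (E1' := arc_const CY (fun u => phi2 g psi p u * cos (1 * (u - t0)) + phi3 g psi p u * sin (1 * (u - t0))) t0 t1 H0 H1 ltac:(lra) HA ltac:(sidec) ltac:(sided)).
  assert (E2' := arc_const CY (fun u => - phi2 g psi p u * sin (1 * (u - t0)) + phi3 g psi p u * cos (1 * (u - t0))) t0 t1 H0 H1 ltac:(lra) HA ltac:(sidec) ltac:(sided)).
  assert (E3' := arc_const CY (fun u => phi3 g psi p u - phi1 g psi p u) t0 t1 H0 H1 ltac:(lra) HA ltac:(sidec) ltac:(sided)).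
  cbv beta in E1', E2', E3'.
  rewrite P1, P2, P3, Q1 in *.
  rewrite Rminus_diag, Rmult_0_r, cos_0, sin_0, Rmult_1_l in *.
  assert (Hb : phi3 g psi p t1 = b) by lra.
  rewrite Hb in *. split; auto.
  set (q := phi2 g psi p t1) in *.
  set (l := t1 - t0) in *.
  pose proof (sin2_cos2 l). unfold Rsqr in *.
  set (cC := cos l) in *. set (sS := sin l) in *.
  assert (K1 : a - (q*cC+b*sS) = 0) by lra.
  assert (K2 : b - (-q*sS+b*cC) = 0) by lra.
  assert (Hq : (q - a) * (q + a) = 0).
  { replace ((q - a) * (q + a)) with
      (-((a - (q*cC+b*sS))*(a + (q*cC+b*sS)) + (b - (-q*sS+b*cC))*(b + (-q*sS+b*cC)))
       - (q*q+b*b)*(sS*sS+cC*cC - 1)) by ring.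
    rewrite K1, K2, H; ring. }
  destruct (Rmult_integral _ _ Hq) as [Hq'|Hq']; [|lra].
  exfalso. apply (cos_ne1 l); [lra|]. fold cC.
  assert (Hqa : q = a) by lra. rewrite Hqa in K1, K2.
  assert (K3 : a * (2 - 2 * cC) = 0).
  { replace (a * (2 - 2 * cC)) with
      ((a - (a*cC+b*sS)) * (1 - cC) + (b - (-a*sS+b*cC)) * sS - a * (sS*sS+cC*cC - 1)) by ring.
    rewrite K1, K2, H; ring. }
  destruct (Rmult_integral _ _ K3); lra.
Qed.
Ltac dtac2 :=
  match goal with
  | |- derivable_pt_lim (fun _ => ?c) _ _ => apply d_const
  | |- derivable_pt_lim (fun u => phi1 ?g ?ps ?pp u) ?x _ => apply (hderiv ps pp x (F1 g)); eassumption
  | |- derivable_pt_lim (fun u => phi2 ?g ?ps ?pp u) ?x _ => apply (hderiv ps pp x (F2 g)); eassumption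
  | |- derivable_pt_lim (fun u => phi3 ?g ?ps ?pp u) ?x _ => apply (hderiv ps pp x (F3 g)); eassumption
  | |- derivable_pt_lim (fun u => @?f u + @?g u) _ _ => apply (d_plus f g); dtac2
  | |- derivable_pt_lim (fun u => @?f u - @?g u) _ _ => apply (d_minus f g); dtac2
  | |- derivable_pt_lim (fun u => @?f u * @?g u) _ _ => apply (d_mult f g); dtac2
  | |- derivable_pt_lim (fun u => - @?f u) _ _ => apply (d_opp f); dtac2
  | |- derivable_pt_lim (fun u => cos (?k * (u - ?c))) _ _ => apply d_cos
  | |- derivable_pt_lim (fun u => sin (?k * (u - ?c))) _ _ => apply d_sin
  end.
Ltac sidedX := intros ? D1 D2; eapply d_eq; [dtac2|];
  change (cmat g CX) with (Xm g); rewrite ?brX1, ?brX2, ?brX3; ring.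

Lemma Xarc t1 t2 a b :
  0 < t1 -> t2 < T -> 0 < g < PI / 2 -> t2 - t1 = PI / sin g ->
  (forall u, t1 < u < t2 -> A u = CX) ->
  phi1 g psi p t1 = 0 -> phi2 g psi p t1 = - a -> phi3 g psi p t1 = b ->
  phi1 g psi p t2 = 0 -> phi2 g psi p t2 = a /\ phi3 g psi p t2 = b.
Proof.
  intros H0 H1 Hg Hl HA P1 P2 P3 Q1.
  assert (Hs : 0 < sin g) by (apply sin_gt_0; lra).
  assert (Hpos : 0 < PI / sin g) by (apply Rdiv_lt_0_compat; [apply PI_RGT_0|lra]).
  assert (Hle : t1 <= t2) by lra.
  assert (E1' := arc_const CX (fun u => phi2 g psi p u * cos (sin g * (u - t1)) + sin g * phi1 g psi p u * sin (sin g * (u - t1))) t1 t2 H0 H1 Hle HA ltac:(sidec) ltac:(sidedX)).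
  assert (E3' := arc_const CX (fun u => phi3 g psi p u - sin g ^ 2 * phi1 g psi p u) t1 t2 H0 H1 Hle HA ltac:(sidec) ltac:(sidedX)).
  cbv beta in E1', E3'.
  assert (Hpi : sin g * (t2 - t1) = PI) by (rewrite Hl; field; lra).
  rewrite Hpi, P1, P2, P3, Q1, Rminus_diag, Rmult_0_r, cos_0, sin_0, cos_PI, sin_PI in *.
  split; lra.
Qed.

End S.

Lemma cont_of_pt T (f : R -> vec) :
  (forall i, (i < 3)%nat -> forall t, continuity_pt (fun u => f u i) t) -> cont_on T f.
Proof.
  intros H i Hi t _ eps Heps.
  destruct (H i Hi t eps Heps) as [d [Hd Hd']].
  exists d. split; auto. intros u _ Hu.
  destruct (Req_dec t u) as [<-|Hne].
  - rewrite Rminus_diag, Rabs_R0. lra.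
  - apply (Hd' u). split; [split; [exact I|exact Hne]|]. exact Hu.
Qed.

Definition cpsi (g : R) : R -> vec := fun u =>
  mkv (sin (sin g * (u - 0))) (sin g * cos (sin g * (u - 0))) (cos g * cos (sin g * (u - 0))).

Lemma competitor g : 0 < g < PI / 2 ->
  admissible g (PI / (2 * sin g)) (fun _ => CX) (cpsi g).
Proof.
  intros Hg.
  assert (Hs : 0 < sin g) by (apply sin_gt_0; lra).
  pose proof (sin2_cos2 g) as HH. unfold Rsqr in HH.
  split; [|split; [|split]].
  - left. apply Rdiv_lt_0_compat; [apply PI_RGT_0|lra].
  - exists nil. split; [constructor|]. split; [intros t []|]. split.
    + intros; reflexivity.
    + intros k Hk. simpl in Hk. lia.
  - split; [|split].
    + apply cont_of_pt. intros i Hi t.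
      destruct i as [|[|[|i]]]; [| | | lia]; unfold cpsi, mkv; ctac.
    + intros i Hi. unfold cpsi, psi0, mkv.
      destruct i as [|[|[|i]]]; [| | | lia]; cbv beta iota;
        rewrite Rminus_diag, Rmult_0_r, ?sin_0, ?cos_0; ring.
    + exists nil. intros t _ _ i Hi. unfold cmat, Xm, mv, mk3, cpsi, mkv.
      destruct i as [|[|[|i]]]; [| | | lia]; cbv beta iota; eapply d_eq; try dtac.
      * transitivity (sin g * cos (sin g * (t - 0)) * (sin g * sin g + cos g * cos g)).
        -- rewrite HH; ring.
        -- ring.
      * ring.
      * ring.
  - unfold inSigma, dot, e3, cpsi, mkv.
    replace (sin g * (PI / (2 * sin g) - 0)) with (PI / 2) by (field; lra).
    rewrite cos_PI2. ring.
Qed.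

Theorem mainTheorem11 (g T : R) (A : R -> ctrl) (sw : list R)
  (psi p : R -> vec) (k : nat) (a b : R) :
  0 < g < PI / 2 ->
  normal_extremal g T A sw psi p ->
  regular g T sw psi p ->
  (k + 3 < length sw)%nat ->
  (forall u, nth k sw 0 < u < nth (k + 1) sw 0 -> A u = CY) ->
  (forall u, nth (k + 1) sw 0 < u < nth (k + 2) sw 0 -> A u = CX) ->
  (forall u, nth (k + 2) sw 0 < u < nth (k + 3) sw 0 -> A u = CY) ->
  0 < nth (k + 1) sw 0 - nth k sw 0 < 2 * PI ->
  nth (k + 2) sw 0 - nth (k + 1) sw 0 = PI / sin g ->
  0 < nth (k + 3) sw 0 - nth (k + 2) sw 0 < 2 * PI ->
  phi1 g psi p (nth k sw 0) = 0 ->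
  phi2 g psi p (nth k sw 0) = a ->
  phi3 g psi p (nth k sw 0) = b ->
  a <> 0 ->
  (phi1 g psi p (nth (k + 3) sw 0) = 0 /\
   phi2 g psi p (nth (k + 3) sw 0) = - a /\
   phi3 g psi p (nth (k + 3) sw 0) = b) /\
  nth (k + 3) sw 0 - nth k sw 0 > PI / sin g /\
  ~ time_optimal g T A psi.
Proof.
  intros Hg [HT [Hpw [[Hcpsi [Hpsi0 [E1 Hdpsi]]] [HS [Hcp [Hnz [[E2 Hdp] Hmax]]]]]]]
    [_ Hsw] Hlen HA1 HA2 HA3 Hl1 Hl2 Hl3 P1 P2 P3 Ha.
  assert (Hs : 0 < sin g) by (apply sin_gt_0; lra).
  assert (Hpos : 0 < PI / sin g) by (apply Rdiv_lt_0_compat; [apply PI_RGT_0|lra]).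
  destruct Hpw as [_ [Hin _]].
  assert (Hi : forall j, (j <= 3)%nat -> 0 < nth (k + j) sw 0 < T /\ In (nth (k + j) sw 0) sw).
  { intros j Hj. assert (HI : In (nth (k + j) sw 0) sw) by (apply nth_In; lia).
    split; auto. }
  destruct (Hi 0%nat ltac:(lia)) as [H0 _]. rewrite Nat.add_0_r in H0.
  destruct (Hi 1%nat ltac:(lia)) as [H1 I1].
  destruct (Hi 2%nat ltac:(lia)) as [H2 I2].
  destruct (Hi 3%nat ltac:(lia)) as [H3 I3].
  destruct (Hsw _ I1) as [Q1 _]. destruct (Hsw _ I2) as [Q2 _]. destruct (Hsw _ I3) as [Q3 _].
  destruct (Yarc g T A psi p E1 E2 Hcpsi Hcp Hdpsi Hdp (nth k sw 0) (nth (k+1) sw 0) a b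
             ltac:(lra) ltac:(lra) Hl1 HA1 P1 P2 P3 Ha Q1) as [R2 R3].
  destruct (Xarc g T A psi p E1 E2 Hcpsi Hcp Hdpsi Hdp (nth (k+1) sw 0) (nth (k+2) sw 0) a b
             ltac:(lra) ltac:(lra) Hg Hl2 HA2 Q1 R2 R3 Q2) as [S2 S3].
  destruct (Yarc g T A psi p E1 E2 Hcpsi Hcp Hdpsi Hdp (nth (k+2) sw 0) (nth (k+3) sw 0) a b
             ltac:(lra) ltac:(lra) Hl3 HA3 Q2 S2 S3 Ha Q3) as [U2 U3].
  split; [auto|]. split; [lra|].
  intros [_ Hopt].
  specialize (Hopt _ _ _ (competitor g Hg)).
  assert (PI / (2 * sin g) < PI / sin g).
  { unfold Rdiv. rewrite Rinv_mult. pose proof PI_RGT_0.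
    assert (0 < / sin g) by (apply Rinv_0_lt_compat; lra). nra. }
  lra.
Qed.
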